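(* For any real numbers $\alpha,\beta$ with $0<\alpha<\beta<1$, there exists a market $(D,H,X,\succ_D,f_H,B_H)$ such that $\overline{w}_h\le \beta B_h$ for every hospital $h\in H$, and such that for every budget vector $B'_H=(B'_h)_{h\in H}$ with $B_h\le B'_h\le (1+\alpha)B_h$ for all $h\in H$, the market has no $B'_H$-stable matching.
   Context: A market $(D,H,X,\succ_D,f_H,B_H)$ consists of a finite set of doctors $D$, a finite set of hospitals $H$, a finite set of contracts $X\subseteq D\times H\times\mathbb{R}_{>0}$ (a contract $x=(d,h,w)$ has doctor $x_D=d$, hospital $x_H=h$ and wage $x_W=w$), for each doctor $d$ a strict preference $\succ_d$ over $X_d\cup\{\emptyset\}$ ($\emptyset$ meaning unmatched), for each hospital $h$ an additive utility $f_h$ on subsets of $X_h$ with $f_h(x)>0$ for each $x\in X_h$ and $f_h(Y)=\sum_{x\in Y}f_h(x)$, and a budget $B_h>0$; it is assumed that $0<x_W\le B_h$ for every $x\in X_h$. For $Y\subseteq X$: $Y_d=\{x\in Y: x_D=d\}$, $Y_h=\{x\in Y:x_H=h\}$, $w_h(Y)=\sum_{x\in Y_h}x_W$. Also $\overline{w}_h=\max_{x\in X_h}x_W$. A matching is a set $Y\subseteq X$ with $|Y_d|\le 1$ for all $d\in D$. Given $B'_H=(B'_h)_{h\in H}$, a matching $Y$ is $B'_H$-feasible if $w_h(Y)\le B'_h$ for all $h$. A matching $Z\subseteq X_h$ blocks $Y$ (for hospital $h$) if for every $x\in Z\setminus Y$ the doctor $x_D$ strictly prefers $x$ to her contract in $Y$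 (or to $\emptyset$ if she has none), $f_h(Z)>f_h(Y_h)$, and $w_h(Z)\le B'_h$. A matching $Y$ is $B'_H$-stable if it is $B'_H$-feasible and no hospital $h$ and set $Z\subseteq X_h$ block $Y$. *)

(* Defs.v *)
From HB Require Import structures.
From mathcomp Require Import all_boot all_order all_algebra.
From mathcomp Require Import reals.
Set Implicit Arguments. Unset Strict Implicit. Unset Printing Implicit Defensive.
Import Order.TTheory GRing.Theory Num.Theory.
Local Open Scope ring_scope.

(* Contracts form a finite type [con] with
   projections doctor/hospital/wage; the triple map is injective so that
   X is (in bijection with) a finite subset of D x H x R_{>0}.
   [pref d a b] means  a >_d b  on  X_d \cup {emptyset}  (None = unmatched). *)
Definition acceptable (doc con : finType) (cD : con -> doc) (d : doc)
  (a : option con) : bool :=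
  if a is Some x then cD x == d else true.

Record market (R : realType) := Market {
  doc : finType;
  hosp : finType;
  con : finType;
  cD : con -> doc;
  cH : con -> hosp;
  cW : con -> R;
  con_inj : injective (fun x => (cD x, cH x, cW x));
  pref : doc -> rel (option con);
  fval : con -> R;           (* f_h(x) for h = cH x; f_h additive *)
  budget : hosp -> R;
  pref_irr : forall d a, acceptable cD d a -> ~~ pref d a a;
  pref_trans : forall d a b c, acceptable cD d a -> acceptable cD d b ->
    acceptable cD d c -> pref d a b -> pref d b c -> pref d a c;
  pref_total : forall d a b, acceptable cD d a -> acceptable cD d b ->
    a != b -> pref d a b || pref d b a;
  fval_pos : forall x, 0 < fval x;
  budget_pos : forall h, 0 < budget h;
  cW_pos : forall x, 0 < cW x;
  cW_le_budget : forall x, cW x <= budget (cH x)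
}.

Section MarketDefs.
Variable R : realType.
Variable M : market R.

Local Notation X := (con M).

Definition setD_ (Y : {set X}) (d : doc M) : {set X} := [set x in Y | cD x == d].
Definition setH_ (Y : {set X}) (h : hosp M) : {set X} := [set x in Y | cH x == h].
Definition wage_h (Y : {set X}) (h : hosp M) : R := \sum_(x in setH_ Y h) cW x.
Definition futil (Y : {set X}) : R := \sum_(x in Y) fval x.

Definition wbar (h : hosp M) : R := \big[Num.max/0]_(x : X | cH x == h) cW x.

Definition is_matching (Y : {set X}) : Prop := forall d, (#|setD_ Y d| <= 1)%N.

Definition contract_of (Y : {set X}) (d : doc M) : option X :=
  [pick y in Y | cD y == d].

Definition feasible (B' : hosp M -> R) (Y : {set X}) : Prop :=
  is_matching Y /\ forall h, wage_h Y h <= B' h.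

Definition blocks (B' : hosp M -> R) (Y : {set X}) (h : hosp M) (Z : {set X}) : Prop :=
  [/\ is_matching Z,
      (forall x, x \in Z -> cH x = h),
      (forall x, x \in Z -> x \notin Y -> pref (cD x) (Some x) (contract_of Y (cD x))),
      futil (setH_ Y h) < futil Z
    & wage_h Z h <= B' h].

Definition stable (B' : hosp M -> R) (Y : {set X}) : Prop :=
  feasible B' Y /\ ~ (exists h Z, blocks B' Y h Z).

End MarketDefs.

(* Main.v *)
Require Import Defs.
From HB Require Import structures.
From mathcomp Require Import all_boot all_order all_algebra.
From mathcomp Require Import reals.
From mathcomp Require Import ring lra.
Import Order.TTheory GRing.Theory Num.Theory.
Local Open Scope ring_scope.
Set Implicit Arguments. Unset Strict Implicit. Unset Printing Implicit Defensive.
Definition conT (p M : nat) := option (bool * ('I_p + 'I_M)).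
Definition docT (p M : nat) := option ('I_p + 'I_M).

Definition cDf p M (c : conT p M) : docT p M :=
  match c with None => None | Some (_, k) => Some k end.
Definition cHf p M (c : conT p M) : bool :=
  match c with None => false | Some (h, _) => h end.
Definition cWf (R : realType) (beta : R) (n M : nat) p (c : conT p M) : R :=
  match c with
  | None => beta
  | Some (false, _) => n%:R^-1
  | Some (true, inl _) => beta
  | Some (true, inr _) => M%:R^-1 end.
Definition fvalf (R : realType) (V del : R) (M : nat) p (c : conT p M) : R :=
  match c with
  | None => V
  | Some (false, inl _) => 1 + del
  | Some (false, inr _) => 1
  | Some (true, inl _) => M%:R + 1
  | Some (true, inr _) => 1 end.
Definition rankf p M (a : option (conT p M)) : nat :=
  match a with
  | None => 2
  | Some None => 0
  | Some (Some (h, inl _)) => if h then 1 else 0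
  | Some (Some (h, inr _)) => if h then 0 else 1 end.
Definition preff p M (d : docT p M) : rel (option (conT p M)) :=
  fun a b => (rankf a < rankf b)%N.

Lemma cDH_inj p M (x y : conT p M) : cDf x = cDf y -> cHf x = cHf y -> x = y.
Proof. by case: x => [[h k]|]; case: y => [[h' k']|] //= [->] ->. Qed.

Lemma inj_f (R : realType) (beta : R) n p M :
  injective (fun x : conT p M => (cDf x, cHf x, cWf beta n x)).
Proof. by move=> x y [] /cDH_inj H /H. Qed.

Lemma pref_irrf p M d (a : option (conT p M)) :
  acceptable (@cDf p M) d a -> ~~ preff d a a.
Proof. by rewrite /preff ltnn. Qed.

Lemma pref_transf p M d (a b c : option (conT p M)) :
  acceptable (@cDf p M) d a -> acceptable (@cDf p M) d b ->
  acceptable (@cDf p M) d c -> preff d a b -> preff d b c -> preff d a c.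
Proof. by move=> _ _ _; apply: ltn_trans. Qed.

Lemma pref_totalf p M d (a b : option (conT p M)) :
  acceptable (@cDf p M) d a -> acceptable (@cDf p M) d b ->
  a != b -> preff d a b || preff d b a.
Proof.
rewrite /preff; case: a => [x|]; case: b => [y|] //=.
- move=> /eqP Hx /eqP Hy Hne.
  have Hh : cHf x != cHf y.
    apply: contra Hne => /eqP Hh; apply/eqP; congr Some; apply: cDH_inj => //.
    by rewrite Hx Hy.
  move: Hh Hx Hy; clear Hne; case: x => [[h [i|j]]|]; case: y => [[h' [i'|j']]|] //= Hh Hx Hy;
    rewrite -Hy in Hx; first [ by case: Hx | by move: Hh {Hx Hy}; case: h; case: h' ].
- by move=> _ _ _; case: x => [[[] [i|j]]|].
- by move=> _ _ _; case: y => [[[] [i|j]]|].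
Qed.

Lemma inv_nat_gt0 (R : realType) (n : nat) : (0 < n)%N -> 0 < (n%:R : R)^-1.
Proof. by move=> Hn; rewrite invr_gt0 ltr0n. Qed.

Lemma inv_nat_le1 (R : realType) (n : nat) : (0 < n)%N -> (n%:R : R)^-1 <= 1.
Proof.
move=> Hn; rewrite invf_le1 ?ltr0n // ler1n //.
Qed.

Definition mkM (R : realType) (beta V del : R) (n M p : nat)
  (hb0 : 0 < beta) (hb1 : beta <= 1) (hn : (0 < n)%N) (hM : (0 < M)%N)
  (hV : 0 < V) (hd : 0 <= del) : market R.
Proof.
refine (@Market R (docT p M) bool (conT p M) (@cDf p M) (@cHf p M)
  (@cWf R beta n M p) (@inj_f R beta n p M) (@preff p M) (@fvalf R V del M p)
  (fun _ => 1) (@pref_irrf p M) (@pref_transf p M) (@pref_totalf p M) _ _ _ _).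
- case=> [[[] [i|j]]|] //=; first by rewrite ltr_pwDr ?ltr0n ?ltr01.
  by rewrite ltr_pwDl.
- by move=> _; exact: ltr01.
- case=> [[[] [i|j]]|] //=; exact: inv_nat_gt0.
- case=> [[[] [i|j]]|] //=; exact: inv_nat_le1.
Defined.

Lemma wbar_le (R : realType) (beta V del : R) (n M p : nat) hb0 hb1 hn hM hV hd
  (hn' : (n%:R : R)^-1 <= beta) (hM' : (M%:R : R)^-1 <= beta) :
  forall h, @wbar R (@mkM R beta V del n M p hb0 hb1 hn hM hV hd) h
            <= beta * @budget R (@mkM R beta V del n M p hb0 hb1 hn hM hV hd) h.
Proof.
move=> h; rewrite /= mulr1 /wbar.
apply: (big_ind (fun y => y <= beta)) => //; first exact: ltW.
- by move=> x y Hx Hy; rewrite ge_max Hx Hy.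
- by case=> [[[] [i|j]]|] //=.
Qed.

Lemma sum_sub (R : realType) (T : finType) (A B : {set T}) (F : T -> R) :
  A \subset B -> (forall x, x \in B -> 0 <= F x) ->
  \sum_(x in A) F x <= \sum_(x in B) F x.
Proof.
move=> AB F0; rewrite [X in _ <= X](big_setID A) /= (setIidPr AB) lerDl.
by apply: sumr_ge0 => x; rewrite inE => /andP[_ /F0].
Qed.

Lemma sum_disjU (R : realType) (T : finType) (A B : {set T}) (F : T -> R) :
  [disjoint A & B] ->
  \sum_(x in A :|: B) F x = \sum_(x in A) F x + \sum_(x in B) F x.
Proof.
move=> dAB; rewrite (big_setID A) /= setIUl setIid.
have -> : B :&: A = set0 by rewrite setIC; apply: disjoint_setI0.
rewrite setU0 setDUl setDv set0U.
by have /setDidPl -> : [disjoint B & A] by rewrite disjoint_sym.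
Qed.

Lemma sum_const_in (R : realType) (T : finType) (A : {set T}) (F : T -> R) c :
  (forall x, x \in A -> F x = c) -> \sum_(x in A) F x = #|A|%:R * c.
Proof.
by move=> Hc; rewrite (eq_bigr (fun _ => c)) // sumr_const mulr_natl.
Qed.

Lemma exists_sub_card (T : finType) (A : {set T}) k :
  (k <= #|A|)%N -> exists S : {set T}, S \subset A /\ #|S| = k.
Proof.
elim: k => [|k IH] Hk; first by exists set0; rewrite sub0set cards0.
have [S [SA cS]] := IH (ltnW Hk).
have : (0 < #|A :\: S|)%N.
  by rewrite cardsD (setIidPr SA) cS subn_gt0.
case/card_gt0P => x; rewrite inE => /andP[xS xA].
exists (x |: S); split; first by rewrite subUset sub1set xA SA.
by rewrite cardsU1 xS cS.
Qed.
Lemma fa_c (R : realType) (N e A B P : R) : 0 < A -> A < B -> B < 1 ->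
  6 < N * (B - A) -> N * e = 1 -> 0 < e -> e <= 1 ->
  N * (1 + A - B) < P -> P <= N * (1 + A - B) + 1 ->
  (1 + e) * (P - N * (1 - B) + 1) <= N * B - 1.
Proof.
move=> hA hAB hB hN hNe he he1 hP1 hP2.
have hX : P - N * (1 - B) + 1 <= N * A + 2 by nra.
have hX0 : 0 <= P - N * (1 - B) + 1 by nra.
have h1 : e * (P - N * (1 - B) + 1) <= e * (N * A + 2) by rewrite ler_pM2l.
have h2 : e * (N * A + 2) = A + 2 * e.
  by rewrite mulrDr mulrA [e * N]mulrC hNe mul1r mulrC.
nra.
Qed.
Lemma fa_b (R : realType) (N A B P : R) : 0 < A -> A < B -> B < 1 ->
  6 < N * (B - A) -> P <= N * (1 + A - B) + 1 -> P <= N.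
Proof. move=> *; nra. Qed.
Lemma fa_d (R : realType) (N A B : R) : 0 < A -> A < B -> B < 1 -> 0 < N ->
  6 < N * (B - A) -> N * (1 + A) <= (N * N) * (B - A).
Proof. move=> *; nra. Qed.
Lemma fa_e (R : realType) (N A B : R) : 0 < A -> A < B -> B < 1 -> 0 < N ->
  6 < N * (B - A) -> 1 < N * B.
Proof. move=> *; nra. Qed.

Lemma rank0_uniq p M (x y : conT p M) :
  cDf x = cDf y -> rankf (Some x) = 0%N -> rankf (Some y) = 0%N -> x = y.
Proof.
case: x => [[h [i|j]]|]; case: y => [[h' [i'|j']]|] //=; 
  try (by case: h); try (by case: h');
  by case: h; case: h' => // [[->]] _ _.
Qed.

Lemma arith1 (R : realType) (p q V del nn : R) : 0 < 1 + del ->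
  p - q < p - nn + 1 -> (1 + del) * (p - nn + 1) <= V ->
  p * (1 + del) < V + q * (1 + del).
Proof.
move=> h1 h2 h3.
have h4 : (1 + del) * (p - q) < (1 + del) * (p - nn + 1) by rewrite ltr_pM2l.
have E : V + q * (1 + del) - p * (1 + del) = V - (1 + del) * (p - q) by ring.
lra.
Qed.

Lemma arith2 (R : realType) (N T K Bb beta V : R) : 0 < N ->
  N * beta + T <= N * Bb -> N * Bb - T < K + 1 -> V <= N * beta - 1 -> V < K.
Proof. move=> *; lra. Qed.

Lemma arith3 (R : realType) (N B b T : R) : 0 <= N * b -> T <= (B - b) * N -> 0 <= N * B - T.
Proof. move=> *; nra. Qed.

Lemma arith4 (R : realType) (N Mm Bb a b K T X : R) :
  K <= N * Bb - T -> Bb <= 1 + a -> 0 <= N -> N * (1 + a) <= Mm * (b - a) ->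
  X <= (1 + a - b) * Mm -> K + T + X <= Mm.
Proof. move=> *; nra. Qed.

Section Main.
Variables (R : realType) (alpha beta V del : R) (n M p : nat).
Hypotheses (hb0 : 0 < beta) (hb1 : beta <= 1) (hn : (0 < n)%N) (hM : (0 < M)%N)
  (hV : 0 < V) (hd : 0 <= del).

Let Mk := @mkM R beta V del n M p hb0 hb1 hn hM hV hd.

Lemma match_h (Z : {set con Mk}) h :
  (forall x, x \in Z -> cH x = h) -> is_matching Z.
Proof.
move=> HZ d; apply/card_le1_eqP => x y; rewrite !inE.
move=> /andP[xZ /eqP dx] /andP[yZ /eqP dy]; apply: cDH_inj.
  by rewrite [cDf x]dx [cDf y]dy.
by rewrite [cHf x](HZ _ xZ) [cHf y](HZ _ yZ).
Qed.

Lemma match_eq (Y : {set con Mk}) x y : is_matching Y ->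
  x \in Y -> y \in Y -> cD x = cD y -> x = y.
Proof.
move=> HY xY yY dxy; have /card_le1_eqP := HY (cD x); apply;
  by rewrite inE ?xY ?yY dxy eqxx.
Qed.

Lemma setH_all (Z : {set con Mk}) h :
  (forall x, x \in Z -> cH x = h) -> setH_ Z h = Z.
Proof.
move=> HZ; apply/setP => x; rewrite inE.
case: (boolP (x \in Z)) => //= xZ; by move: (HZ _ xZ) => /= ->; rewrite eqxx.
Qed.

Lemma pref0 (Y : {set con Mk}) (x : con Mk) : rankf (Some x) = 0%N -> x \notin Y ->
  pref (cD x) (Some x) (contract_of Y (cD x)).
Proof.
move=> r0 xY; rewrite /contract_of; case: pickP => [y /andP[yY /eqP dy]|_] /=;
  last by rewrite /preff r0.
rewrite /preff r0 lt0n; apply/negP => /eqP ry.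
have /rank0_uniq := dy; move/(_ ry r0) => exy.
by move: yY; rewrite exy (negbTE xY).
Qed.

Lemma pref1 (Y : {set con Mk}) (x : con Mk) : rankf (Some x) = 1%N ->
  (forall y, y \in Y -> cD y != cD x) ->
  pref (cD x) (Some x) (contract_of Y (cD x)).
Proof.
move=> r1 HY; rewrite /contract_of; case: pickP => [y /andP[yY dy]|_] /=.
  by have := HY _ yY; rewrite dy.
by rewrite /preff r1.
Qed.


Hypotheses (ha0 : 0 <= alpha) (hd0 : 0 < del)
  (Hp : 1 + alpha < beta + p%:R * n%:R^-1)
  (Hpn : (p <= n)%N)
  (HV1 : (1 + del) * (p%:R - n%:R * (1 - beta) + 1) <= V)
  (HV2 : V <= n%:R * beta - 1)
  (HM : n%:R * (1 + alpha) <= M%:R * (beta - alpha)).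

Local Notation bC := (None : con Mk).
Local Notation zc h i := (Some (h, inl i) : con Mk).
Local Notation xc h j := (Some (h, inr j) : con Mk).

Definition ZS h : {set con Mk} := [set zc h i | i : 'I_p].
Definition XS h : {set con Mk} := [set xc h j | j : 'I_M].

Lemma card_ZS h : #|ZS h| = p.
Proof. by rewrite card_imset ?card_ord // => i j [->]. Qed.
Lemma card_XS h : #|XS h| = M.
Proof. by rewrite card_imset ?card_ord // => i j [->]. Qed.

Lemma in_ZS h i : zc h i \in ZS h.
Proof. by apply/imsetP; exists i. Qed.
Lemma in_XS h j : xc h j \in XS h.
Proof. by apply/imsetP; exists j. Qed.

Lemma sum_W_ZS0 : \sum_(x in ZS false) cW x = p%:R * n%:R^-1.
Proof. by rewrite (@sum_const_in _ _ _ _ n%:R^-1) ?card_ZS // => x /imsetP[i _ ->]. Qed.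
Lemma sum_W_XS1 : \sum_(x in XS true) cW x = 1.
Proof.
rewrite (@sum_const_in _ _ _ _ M%:R^-1) ?card_XS ?divff ?pnatr_eq0 -?lt0n //.
by move=> x /imsetP[i _ ->].
Qed.
Lemma sum_f_ZS0 : \sum_(x in ZS false) fval x = p%:R * (1 + del).
Proof. by rewrite (@sum_const_in _ _ _ _ (1 + del)) ?card_ZS // => x /imsetP[i _ ->]. Qed.
Lemma sum_f_XS1 : \sum_(x in XS true) fval x = M%:R.
Proof. by rewrite (@sum_const_in _ _ _ _ 1) ?card_XS ?mulr1 // => x /imsetP[i _ ->]. Qed.


Lemma fval_gt0 (x : con Mk) : 0 < fval x.
Proof. exact: fval_pos. Qed.
Lemma cW_gt0 (x : con Mk) : 0 < cW x.
Proof. exact: cW_pos. Qed.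

Lemma caseB (B' : hosp Mk -> R) (HB : forall h, 1 <= B' h <= 1 + alpha)
  (Y : {set con Mk}) :
  stable B' Y -> (forall i, zc true i \notin Y) -> False.
Proof.
move=> [[Hm Hw] Hnb] Hz1.
have blk : forall h Z, blocks B' Y h Z -> False by move=> h Z HZ; apply: Hnb; exists h, Z.
have /andP[HB0 HB0'] := HB false; have /andP[HB1 HB1'] := HB true.
have HY1 : setH_ Y true \subset XS true.
  apply/subsetP => x; rewrite inE => /andP[xY /eqP].
  case: x xY => [[h [i|j]]|] //= xY Hh; last by rewrite Hh in_XS.
  by rewrite Hh (negbTE (Hz1 i)) in xY.
have Hx1 : forall j, xc true j \in Y.
  move=> j; apply/negPn/negP => Hj.
  have HZh : forall x, x \in xc true j |: setH_ Y true -> cH x = true.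
    by move=> x; rewrite !inE => /orP[/eqP->//|/andP[_ /eqP]].
  apply: (blk true (xc true j |: setH_ Y true)); split.
  - exact: match_h HZh.
  - exact: HZh.
  - move=> x; rewrite !inE => /orP[/eqP-> _|/andP[xY _]]; last by rewrite xY.
    exact: pref0.
  - rewrite /futil big_setU1 /=; last by rewrite inE (negbTE Hj).
    by rewrite ltrDr ltr01.
  - rewrite /wage_h setH_all //; apply: (le_trans _ HB1).
    rewrite -sum_W_XS1; apply: sum_sub => [|x _]; last exact: ltW (cW_gt0 x).
    by rewrite subUset sub1set in_XS HY1.
have Hz0 : forall i, zc false i \in Y.
  move=> i; apply/negPn/negP => Hi.
  have HZh : forall x, x \in [set zc true i] -> cH x = true.
    by move=> x; rewrite inE => /eqP->.
  apply: (blk true [set zc true i]); split.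
  - exact: match_h HZh.
  - exact: HZh.
  - move=> x; rewrite inE => /eqP-> _; apply: pref1 => // y.
    case: y => [[h [i'|j]]|] //= yY; apply/eqP => -[Ei]; subst i'.
    by case: h yY; rewrite ?(negbTE Hi) ?(negbTE (Hz1 i)).
  - have H := sum_sub (F := @fval R Mk) HY1 (fun x _ => ltW (fval_gt0 x)).
    rewrite sum_f_XS1 in H; rewrite /futil big_set1 /=; lra.
  - rewrite /wage_h setH_all // big_set1 /=; exact: le_trans hb1 HB1.
have HbY : bC \notin Y.
  apply/negP => bY.
  have : \sum_(x in bC |: ZS false) cW x <= wage_h Y false.
    apply: sum_sub => [|x _]; last exact: ltW (cW_gt0 x).
    rewrite subUset sub1set inE bY eqxx /=; apply/subsetP => x /imsetP[i _ ->].
    by rewrite inE Hz0 eqxx.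
  rewrite big_setU1 /=; last by apply/imsetP => -[i _].
  rewrite sum_W_ZS0 => H; have H2 := le_trans H (le_trans (Hw false) HB0'). move: Hp H2; generalize (p%:R / n%:R : R) => t. lra.
have Hnpos : 0 < (n%:R : R) by rewrite ltr0n.
set q := Num.truncn (n%:R * (B' false - beta)).
have Hbb : 0 <= B' false - beta.
  move: HB0 hb1; generalize (B' false) => b0; lra.
have Hq0 : 0 <= n%:R * (B' false - beta) by apply: mulr_ge0; [exact: ltW | ].
have /andP[Hq1 Hq2] := Num.Theory.truncn_itv Hq0; rewrite -/q in Hq1 Hq2.
have Hpe : n%:R * (p%:R / n%:R) = p%:R :> R by rewrite mulrCA divff ?mulr1 // gt_eqF.
have Hqp : (q <= p)%N.
  rewrite -(ler_nat R); apply: ltW; apply: (le_lt_trans Hq1).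
  rewrite -Hpe ltr_pM2l //; move: Hp HB0'; generalize (p%:R / n%:R : R) (B' false) => t b0; lra.
set S := [set zc false (widen_ord Hqp i) | i : 'I_q].
have cS : #|S| = q.
  by rewrite card_imset ?card_ord // => i j H; case: H => H; exact: ord_inj H.
have SY : forall x, x \in S -> x \in Y by move=> x /imsetP[i _ ->].
have bS : bC \notin S by apply/imsetP => -[i _].
have HZh : forall x, x \in bC |: S -> cH x = false.
  by move=> x; rewrite !inE => /orP[/eqP->//|/imsetP[i _ ->]].
have HY0 : setH_ Y false \subset ZS false.
  apply/subsetP => x; rewrite inE => /andP[xY /eqP].
  case: x xY => [[h [i|j]]|] //= xY Hh; first by rewrite Hh in_ZS.
    rewrite Hh in xY; have := match_eq Hm xY (Hx1 j) erefl; by [].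
  by rewrite xY in HbY.
apply: (blk false (bC |: S)); split.
- exact: match_h HZh.
- exact: HZh.
- move=> x; rewrite !inE => /orP[/eqP-> _|/SY ->//]; exact: pref0.
- have H := sum_sub (F := @fval R Mk) HY0 (fun x _ => ltW (fval_gt0 x)).
  rewrite sum_f_ZS0 in H; rewrite /futil big_setU1 //=.
  rewrite (@sum_const_in _ _ S _ (1 + del)) ?cS; last by move=> x /imsetP[i _ ->].
  apply: (le_lt_trans H).
  have Hq3 : p%:R - q%:R < p%:R - n%:R * (1 - beta) + 1 :> R.
    move: Hq2; rewrite -natr1; move: HB0; generalize (B' false) => b0.
    generalize (q%:R : R) => qq; move=> Hb Hq.
    have : n%:R * (1 - beta) <= n%:R * (b0 - beta) by rewrite ler_pM2l //; lra.
    lra.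
  have Hd1 : 0 < 1 + del by move: hd0; generalize del => dd; lra.
  exact: arith1 Hd1 Hq3 HV1.
- rewrite /wage_h (setH_all HZh) big_setU1 //=.
  rewrite (@sum_const_in _ _ S _ n%:R^-1) ?cS; last by move=> x /imsetP[i _ ->].
  have : q%:R * n%:R^-1 <= B' false - beta.
    by rewrite ler_pdivrMr // mulrC.
  generalize (q%:R * n%:R^-1 : R) (B' false) => t b0; lra.
Qed.


Lemma caseA1 (B' : hosp Mk -> R) (HB : forall h, 1 <= B' h <= 1 + alpha)
  (Y : {set con Mk}) i0 :
  stable B' Y -> zc true i0 \in Y -> bC \notin Y -> False.
Proof.
move=> [[Hm Hw] Hnb] Hi0 HbY.
have blk : forall h Z, blocks B' Y h Z -> False by move=> h Z HZ; apply: Hnb; exists h, Z.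
have /andP[HB0 HB0'] := HB false.
have Hz0 : zc false i0 \notin Y.
  by apply/negP => H; have := match_eq Hm H Hi0 erefl.
set Y0 := setH_ Y false.
have Y0Y : forall x, x \in Y0 -> x \in Y by move=> x; rewrite inE => /andP[].
have Y0h : forall x, x \in Y0 -> cH x = false by move=> x; rewrite inE => /andP[_ /eqP].
have zY0 : zc false i0 \notin Y0 by apply/negP => /Y0Y; rewrite (negbTE Hz0).
have HnR : 0 < (n%:R : R) by rewrite ltr0n.
case: (boolP (wage_h Y false + n%:R^-1 <= B' false)) => Hroom.
  have HZh : forall x, x \in zc false i0 |: Y0 -> cH x = false.
    by move=> x; rewrite !inE => /orP[/eqP->//|/andP[_ /eqP]].
  apply: (blk false (zc false i0 |: Y0)); split.
  - exact: match_h HZh.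
  - exact: HZh.
  - move=> x; rewrite !inE => /orP[/eqP-> _|/andP[xY _]]; last by rewrite xY.
    exact: pref0.
  - rewrite /futil big_setU1 //= -/Y0.
    move: (\sum_(x in Y0) fval x) hd0 => s d0; lra.
  - rewrite /wage_h (setH_all HZh) big_setU1 //=.
    by rewrite addrC.
have [j Hj] : exists j, xc false j \in Y.
  case: (boolP [exists j, xc false j \in Y]) => [/existsP//|/existsPn Hn].
  exfalso; move/negP: Hroom; apply.
  have : zc false i0 |: Y0 \subset ZS false.
    rewrite subUset sub1set in_ZS /=; apply/subsetP => x.
    rewrite inE => /andP[xY /eqP].
    case: x xY => [[h [i|j]]|] //= xY Hh; first by rewrite Hh in_ZS.
      by rewrite Hh (negbTE (Hn j)) in xY.
    by rewrite xY in HbY.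
  move/(sum_sub (F := @cW R Mk)) => /(_ (fun x _ => ltW (cW_gt0 x))).
  rewrite big_setU1 // sum_W_ZS0 -/Y0 => H.
  have Hp1 : p%:R * n%:R^-1 <= (1 : R).
    by rewrite ler_pdivrMr // mul1r ler_nat.
  have E : cW (zc false i0) = n%:R^-1 by [].
  rewrite E in H.
  have H' : n%:R^-1 + wage_h Y false <= p%:R * n%:R^-1 := H.
  move: H' Hp1 HB0.
  generalize (wage_h Y false) (p%:R * n%:R^-1 : R) (n%:R^-1 : R) (B' false) => a b c d.
  lra.
have jY0 : xc false j \in Y0 by rewrite inE Hj eqxx.
have zY0' : zc false i0 \notin Y0 :\ xc false j by rewrite inE negb_and zY0 orbT.
have HZh : forall x, x \in zc false i0 |: (Y0 :\ xc false j) -> cH x = false.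
  by move=> x; rewrite !inE => /orP[/eqP->//|/andP[_ /andP[_ /eqP]]].
apply: (blk false (zc false i0 |: (Y0 :\ xc false j))); split.
- exact: match_h HZh.
- exact: HZh.
- move=> x; rewrite !inE => /orP[/eqP-> _|/andP[_ /andP[xY _]]]; last by rewrite xY.
  exact: pref0.
- rewrite /futil big_setU1 //= -/Y0 (big_setD1 (xc false j) jY0) /=.
  move: (\sum_(x in Y0 :\ xc false j) fval x) hd0 => s d0; lra.
- rewrite /wage_h (setH_all HZh) big_setU1 //=.
  move: (Hw false); rewrite /wage_h -/Y0 (big_setD1 (xc false j) jY0) /=.
  by [].
Qed.



Lemma caseA2 (B' : hosp Mk -> R) (HB : forall h, 1 <= B' h <= 1 + alpha)
  (Y : {set con Mk}) i0 :
  stable B' Y -> zc true i0 \in Y -> bC \in Y -> False.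
Proof.
move=> [[Hm Hw] Hnb] Hi0 HbY.
have blk : forall h Z, blocks B' Y h Z -> False by move=> h Z HZ; apply: Hnb; exists h, Z.
have /andP[HB0 HB0'] := HB false; have /andP[HB1 HB1'] := HB true.
have HnR : 0 < (n%:R : R) by rewrite ltr0n.
have HMR : 0 < (M%:R : R) by rewrite ltr0n.
set Y0 := setH_ Y false.
have bY0 : bC \in Y0 by rewrite inE HbY eqxx.
set T0 := Y0 :\ bC.
have T0Y : forall x, x \in T0 -> x \in Y by move=> x; rewrite !inE => /andP[_ /andP[]].
have T0h : forall x, x \in T0 -> cH x = false.
  by move=> x; rewrite !inE => /andP[_ /andP[_ /eqP]].
have T0W : forall x, x \in T0 -> cW x = n%:R^-1.
  move=> x; rewrite !inE => /andP[]; case: x => [[h [i|j]]|] //= _ /andP[_ /eqP ->] //.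
set t := #|T0|.
have HwY0 : wage_h Y false = beta + t%:R * n%:R^-1.
  by rewrite /wage_h -/Y0 (big_setD1 bC bY0) -/T0 (sum_const_in T0W).
set J1 := [set j | xc true j \in Y].
have HX1 : beta + #|J1|%:R * M%:R^-1 <= 1 + alpha.
  have S1 : zc true i0 |: [set xc true j | j in J1] \subset setH_ Y true.
    rewrite subUset sub1set inE Hi0 eqxx /=; apply/subsetP => x /imsetP[j].
    by rewrite inE => Hj ->; rewrite inE Hj eqxx.
  have := sum_sub (F := @cW R Mk) S1 (fun x _ => ltW (cW_gt0 x)).
  rewrite big_setU1 /=; last by apply/imsetP => -[j].
  rewrite (@sum_const_in _ _ _ _ M%:R^-1); last by move=> x /imsetP[j _ ->].
  rewrite card_imset; last by move=> j j' [].
  move=> H; have H' : beta + #|J1|%:R * M%:R^-1 <= wage_h Y true := H.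
  exact: le_trans H' (le_trans (Hw true) HB1').
set J0 := [set j | xc false j \in Y].
have HJ0 : (#|J0| <= t)%N.
  have -> : #|J0| = #|[set xc false j | j in J0]|.
    by rewrite card_imset // => j j' [].
  apply: subset_leq_card; apply/subsetP => x /imsetP[j].
  by rewrite !inE => Hj ->; rewrite Hj andbT.
set U := ~: (J1 :|: J0).
have HU : (M - #|J1| - t <= #|U|)%N.
  have := cardsC (J1 :|: J0); rewrite card_ord -/U => HC.
  have := cardsU J1 J0; move=> HU'.
  have : (#|J1 :|: J0| <= #|J1| + t)%N.
    by rewrite HU'; apply: leq_trans (leq_subr _ _) _; rewrite leq_add2l.
  move=> H.
  have -> : (M - #|J1| - t = #|J1 :|: J0| + #|U| - #|J1| - t)%N by rewrite HC.
  by rewrite -subnDA leq_subLR leq_add2r.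
have Ht : t%:R <= (B' false - beta) * n%:R.
  by move: (Hw false); rewrite HwY0 -lerBrDl ler_pdivrMr.
have Hk0 : 0 <= n%:R * B' false - t%:R.
  by apply: arith3 Ht; apply: mulr_ge0; apply: ltW.
set k := Num.truncn (n%:R * B' false - t%:R).
have /andP[Hk1 Hk2] := Num.Theory.truncn_itv Hk0; rewrite -/k in Hk1 Hk2.
have HX1' : #|J1|%:R <= (1 + alpha - beta) * M%:R.
  by move: HX1; rewrite -lerBrDl ler_pdivrMr.
have Hsum : (k + t + #|J1| <= M)%N.
  rewrite -(ler_nat R) !natrD; exact: (arith4 Hk1 HB0' (ltW HnR) HM HX1').
have HkU : (k <= #|U|)%N.
  apply: leq_trans _ HU; rewrite -subnDA leq_subRL.
    by rewrite addnC [(#|J1| + t)%N]addnC addnA.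
  by apply: leq_trans _ Hsum; rewrite -addnA [(t + _)%N]addnC leq_addl.
have [S [SU cS]] := exists_sub_card HkU.
set XS0 := [set xc false j | j in S].
have cXS0 : #|XS0| = k by rewrite card_imset // => j j' [].
have XS0nY : forall x, x \in XS0 -> x \notin Y.
  move=> x /imsetP[j jS ->]; have := subsetP SU j jS.
  by rewrite !inE negb_or => /andP[_].
have dT : [disjoint T0 & XS0].
  rewrite -setI_eq0; apply/eqP/setP => x; rewrite in_setI in_set0.
  apply/negP => /andP[/T0Y xY /XS0nY]; by rewrite xY.
have HZh : forall x, x \in T0 :|: XS0 -> cH x = false.
  by move=> x; rewrite inE => /orP[/T0h //|/imsetP[j _ ->]].
apply: (blk false (T0 :|: XS0)); split.
- exact: match_h HZh.
- exact: HZh.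
- move=> x; rewrite inE => /orP[/T0Y -> //|]; move=> /imsetP[j jS ->] _.
  apply: pref1 => // y; case: y => [[h [i|j']]|] //= yY; apply/eqP => -[Ej]; subst j'.
  have := subsetP SU j jS; rewrite !inE negb_or => /andP[].
  by case: h yY => yY; rewrite yY.
- have E1 : \sum_(x in Y0) fval x = V + \sum_(x in T0) fval x.
    by rewrite (big_setD1 bC bY0).
  rewrite /futil -/Y0 E1 sum_disjU //.
  rewrite (@sum_const_in _ _ XS0 _ 1) ?cXS0 ?mulr1; last by move=> x /imsetP[j _ ->].
  rewrite addrC ltrD2l.
  have Ht' : n%:R * beta + t%:R <= n%:R * B' false.
    by move: Ht; rewrite mulrBl mulrC [beta * _]mulrC lerBrDl.
  rewrite -natr1 in Hk2; exact: arith2 HnR Ht' Hk2 HV2.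
- rewrite /wage_h (setH_all HZh) sum_disjU // (sum_const_in T0W).
  rewrite (@sum_const_in _ _ XS0 _ n%:R^-1) ?cXS0; last by move=> x /imsetP[j _ ->].
  rewrite -/t -mulrDl ler_pdivrMr // -natrD mulrC.
  by rewrite natrD -lerBrDl.
Qed.


Lemma no_stable (B' : hosp Mk -> R) (HB : forall h, 1 <= B' h <= 1 + alpha)
  (Y : {set con Mk}) : ~ stable B' Y.
Proof.

move=> HS; case: (boolP [exists i, zc true i \in Y]) => [/existsP[i Hi]|/existsPn Hz].
  case: (boolP (bC \in Y)) => Hb.
    exact: (caseA2 HB HS Hi Hb).
  exact: (caseA1 HB HS Hi Hb).
exact: (caseB HB HS Hz).
Qed.

End Main.

Lemma fa_f (R : realType) (N B : R) : 1 < N * B -> 1 <= N -> 1 <= (N * N) * B.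
Proof. move=> *; nra. Qed.

Unset Implicit Arguments.

Theorem theorem1 (R : realType) (alpha beta : R) :
  0 < alpha -> alpha < beta -> beta < 1 ->
  exists M : market R,
    (forall h : hosp M, wbar h <= beta * budget h) /\
    (forall B' : hosp M -> R,
       (forall h, budget h <= B' h <= (1 + alpha) * budget h) ->
       ~ (exists Y : {set con M}, stable B' Y)).
Proof.
move=> ha hab hb.
have hb0 : 0 < beta by apply: lt_trans ha hab.
have hb1 : beta <= 1 by apply: ltW.
have hdd : 0 < beta - alpha by rewrite subr_gt0.
set n := (Num.truncn (6 / (beta - alpha))).+1.
have hn : (0 < n)%N by [].
have HnR : 0 < (n%:R : R) by rewrite ltr0n.
have Hnd : 6 < n%:R * (beta - alpha).
  have H0 : 0 <= 6 / (beta - alpha) by apply: divr_ge0 => //; apply: ltW.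
  have /andP[_ H2] := Num.Theory.truncn_itv H0.
  by rewrite -ltr_pdivrMr.
set M := (n * n)%N.
have hM : (0 < M)%N by rewrite muln_gt0 hn.
have HMR : (M%:R : R) = n%:R * n%:R by rewrite natrM.
set p := (Num.truncn (n%:R * (1 + alpha - beta))).+1.
have Hp0 : 0 <= n%:R * (1 + alpha - beta).
  apply: mulr_ge0; first exact: ltW.
  lra.
have /andP[Hp1 Hp2] := Num.Theory.truncn_itv Hp0.
have Hp1' : p%:R <= n%:R * (1 + alpha - beta) + 1 by rewrite -natr1 lerD2r.
set del := (n%:R : R)^-1.
have hd0 : 0 < del by rewrite invr_gt0.
have hd' : 0 <= del := ltW hd0.
have hNe : n%:R * del = 1 by rewrite mulfV // lt0r_neq0.
have he1 : del <= 1 by exact: inv_nat_le1.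
have hnB : 1 < n%:R * beta by exact: fa_e ha hab hb HnR Hnd.
set V := n%:R * beta - 1.
have hV : 0 < V by rewrite subr_gt0.
exists (@mkM R beta V del n M p hb0 hb1 hn hM hV hd'); split.
  apply: wbar_le.
    by rewrite -[_^-1]mulr1 ler_pdivrMl //; apply: ltW.
  have HMR0 : 0 < (M%:R : R) by rewrite ltr0n.
  rewrite -[_^-1]mulr1 ler_pdivrMl // HMR; apply: fa_f hnB _.
  by rewrite ler1n.
move=> B' HB [Y HY].
have HB' : forall h, 1 <= B' h <= 1 + alpha.
  by move=> h; have := HB h; rewrite /= mulr1.
have Hp : 1 + alpha < beta + p%:R / n%:R.
  have : 1 + alpha - beta < p%:R / n%:R by rewrite ltr_pdivlMr // mulrC.
  move: (p%:R / n%:R : R) => q; lra.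
have Hpn : (p <= n)%N by rewrite -(ler_nat R); exact: fa_b ha hab hb Hnd Hp1'.
have HV1 : (1 + del) * (p%:R - n%:R * (1 - beta) + 1) <= V.
  exact: fa_c ha hab hb Hnd hNe hd0 he1 Hp2 Hp1'.
have HM : n%:R * (1 + alpha) <= M%:R * (beta - alpha).
  by rewrite HMR; exact: fa_d.
exact: (no_stable hd0 Hp Hpn HV1 (lexx _) HM HB' HY).
Qed.
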